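(* Let $T$ be a rooted binary phylogenetic tree with root $\rho$ of out-degree 2 and leaf set $X$, under the $N_r$ model for any $r\ge2$. For $x\in X$ let $d(x)$ be the number of edges on the path from $\rho$ to $x$. Then (i) $RA_\varphi(T)=1-\sum_{x\in X}\left(\tfrac12\right)^{d(x)}p(x)$; (ii) $RA_\varphi(T)\ge 1-p_{\max}$ where $p_{\max}=\max\{p(x):x\in X\}$; (iii) if $p(x)$ takes the same value for all leaves $x\in X$ (the ultrametric case), then $RA_\varphi(T)=1-p_{\max}$.
   Context: A rooted binary phylogenetic tree is a finite tree with a distinguished root vertex $\rho$, all edges directed away from $\rho$, in which $\rho$ has out-degree 2 (or 1), and every other vertex has in-degree 1 and out-degree 0 or 2; out-degree-0 vertices are leaves, forming the leaf set $X$. Under the Neyman $r$-state model $N_r$ ($r\ge2$) on a state set $\mathcal A$ with $|\mathcal A|=r$, each edge $e$ carries a substitution probability $p_e\in[0,\frac{r-1}{r}]$; given $F(\rho)$, states propagate independently along edges: for an edge $(u,v)$, $F(v)=F(u)$ with probability $1-p_e$, and otherwise $F(v)$ is uniform among the $r-1$ other states. The character is $f=F|_X$, and $p(v)$ is the probability that $F(v)\neq F(\rho)$. The coin-toss method $\varphi$: each leaf is assigned its state $f(x)$; proceeding towards the root, a vertex whose two children have been assigned the same state gets that state, and a vertex whose children have different states gets one of the two states chosen by an independent fair coin toss (a vertex with a single child gets its child's state). $\varphi(T,f)$ is the state assigned to the root, and $RA_\varphi(T)=\mathbb P(\varphi(T,f)=\alpha\mid F(\rho)=\alpha)$. *)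

(* Defs.v *)
From HB Require Import structures.
From mathcomp Require Import all_boot all_order all_algebra.
Set Implicit Arguments. Unset Strict Implicit. Unset Printing Implicit Defensive.
Import Order.TTheory GRing.Theory Num.Theory.
Local Open Scope ring_scope.

(* Rooted binary phylogenetic trees with edge substitution probabilities.
   [Node pl l pr rt] is an internal vertex with two children [l] and [rt];
   [pl] (resp. [pr]) is the substitution probability p_e of the edge to [l]
   (resp. [rt]).  Leaves are numbered left-to-right 0 .. nleaves t - 1. *)
Inductive tree (R : Type) :=
| Leaf : tree R
| Node : R -> tree R -> R -> tree R -> tree R.
Arguments Leaf {R}.

Section Model.
Variable R : realFieldType.
Variable r : nat.

Fixpoint nleaves (t : tree R) : nat :=
  match t with Leaf => 1%N | Node _ l _ rt => (nleaves l + nleaves rt)%N end.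

Fixpoint ninternal (t : tree R) : nat :=
  match t with Leaf => 0%N | Node _ l _ rt => (ninternal l + ninternal rt).+1 end.

Fixpoint depths (t : tree R) : seq nat :=
  match t with
  | Leaf => [:: 0%N]
  | Node _ l _ rt => map S (depths l) ++ map S (depths rt)
  end.

Definition is_node (t : tree R) : bool :=
  if t is Node _ _ _ _ then true else false.

Fixpoint valid_probs (t : tree R) : Prop :=
  match t with
  | Leaf => True
  | Node pl l pr rt =>
      [/\ 0 <= pl <= (r.-1)%:R / r%:R, 0 <= pr <= (r.-1)%:R / r%:R,
          valid_probs l & valid_probs rt]
  end.

Definition trans (p : R) (a b : 'I_r) : R :=
  if a == b then 1 - p else p / (r.-1)%:R.

(* P(f = F|_X | F(root) = a) for a character f listed in leaf order *)
Fixpoint Pchar (t : tree R) (a : 'I_r) (f : seq 'I_r) : R :=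
  match t with
  | Leaf => if f is [:: b] then (b == a)%:R else 0
  | Node pl l pr rt =>
      (\sum_(b : 'I_r) trans pl a b * Pchar l b (take (nleaves l) f)) *
      (\sum_(b : 'I_r) trans pr a b * Pchar rt b (drop (nleaves l) f))
  end.

(* Coin-toss method with explicit coins: one coin per internal vertex
   (listed in preorder); [d] is an irrelevant default state. *)
Fixpoint phi (d : 'I_r) (t : tree R) (f : seq 'I_r) (c : seq bool) : 'I_r :=
  match t with
  | Leaf => nth d f 0
  | Node _ l _ rt =>
      let cs := behead c in
      let sl := phi d l (take (nleaves l) f) (take (ninternal l) cs) in
      let sr := phi d rt (drop (nleaves l) f) (drop (ninternal l) cs) in
      if sl == sr then sl else if head false c then sl else sr
  end.

(* RA_phi(T) = P(phi(T,f) = alpha | F(root) = alpha), fair independent coins *)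
Definition RA (t : tree R) (alpha : 'I_r) : R :=
  \sum_(f : (nleaves t).-tuple 'I_r)
    Pchar t alpha f *
    (\sum_(c : (ninternal t).-tuple bool)
        (phi alpha t f c == alpha)%:R / 2%:R ^+ ninternal t).

(* p(x) = P(F(x) <> F(root) | F(root) = alpha) for the leaf x numbered i *)
Definition pleaf (t : tree R) (alpha : 'I_r) (i : nat) : R :=
  \sum_(f : (nleaves t).-tuple 'I_r)
    (nth alpha f i != alpha)%:R * Pchar t alpha f.

(* p_max = max over leaves; all p(x) >= 0 and there is >= 1 leaf,
   so 0 as the neutral element is harmless *)
Definition pmax (t : tree R) (alpha : 'I_r) : R :=
  \big[Num.max/0]_(i < nleaves t) pleaf t alpha i.

End Model.

(* Main.v *)
Require Import Defs.
From HB Require Import structures.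
From mathcomp Require Import all_boot all_order all_algebra.
From mathcomp Require Import ring.
Import Order.TTheory GRing.Theory Num.Theory.
Local Open Scope ring_scope.

Section Tup.
Variable R : realFieldType.
Variable T : finType.

Lemma sum_tuple0 (F : seq T -> R) : \sum_(t : 0.-tuple T) F t = F [::].
Proof.
rewrite (big_pred1 [tuple]) // => t /=; apply/esym/eqP; exact: tuple0.
Qed.

Lemma sum_tuple_cons n (F : seq T -> R) :
  \sum_(t : n.+1.-tuple T) F t = \sum_(x : T) \sum_(t : n.-tuple T) F (x :: t).
Proof.
rewrite pair_big /=.
rewrite (reindex (fun p : T * n.-tuple T => cons_tuple p.1 p.2)) /=.
  by [].
exists (fun t : n.+1.-tuple T => (thead t, behead_tuple t)).
  by case=> x t _; congr (_, _); apply: val_inj.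
by move=> t _; apply: val_inj => /=; rewrite [in RHS](tuple_eta t).
Qed.

Lemma sum_tuple_cat n1 n2 (F : seq T -> R) :
  \sum_(t : (n1 + n2).-tuple T) F t =
  \sum_(t1 : n1.-tuple T) \sum_(t2 : n2.-tuple T) F (t1 ++ t2).
Proof.
elim: n1 F => [|n1 IH] F.
  by rewrite (sum_tuple0 (fun t1 => \sum_(t2 : n2.-tuple T) F (t1 ++ t2))).
transitivity (\sum_(x : T) \sum_(t : (n1 + n2).-tuple T) F (x :: t)).
  exact: (sum_tuple_cons (n1 + n2) F).
rewrite (sum_tuple_cons n1 (fun t1 => \sum_(t2 : n2.-tuple T) F (t1 ++ t2))).
apply: eq_bigr => x _. exact: (IH (fun s => F (x :: s))).
Qed.

Lemma sum_tuple_const n (c : R) :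
  \sum_(t : n.-tuple T) c = c * (#|T| ^ n)%:R.
Proof. by rewrite sumr_const card_tuple mulr_natr. Qed.
End Tup.

Section Main.
Variable R : realFieldType.
Variable r : nat.
Hypothesis hr : (2 <= r)%N.

Lemma size_depths (t : tree R) : size (depths t) = nleaves t.
Proof. elim: t => //= pl l IHl pr rt IHr; by rewrite size_cat !size_map IHl IHr. Qed.

Lemma nleaves_gt0 (t : tree R) : (0 < nleaves t)%N.
Proof. elim: t => //= _ l IHl _ rt IHr; by rewrite addn_gt0 IHl. Qed.

Lemma r1_neq0 : (r.-1)%:R != 0 :> R.
Proof. by rewrite pnatr_eq0; case: r hr => // [[|]]. Qed.

Lemma trans_sum (p : R) a : \sum_(b : 'I_r) trans p a b = 1.
Proof.
rewrite (bigD1 a) //= /trans eqxx.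
rewrite (eq_bigr (fun _ => p / (r.-1)%:R)); last first.
  by move=> b; rewrite eq_sym => /negbTE ->.
rewrite sumr_const (_ : #|_| = r.-1); last by have := cardC1 a; rewrite card_ord.
rewrite -[p / _ *+ _]mulr_natr divfK ?subrK //.
exact: r1_neq0.
Qed.

Lemma sum_node (pl pr : R) (l rt : tree R) (a : 'I_r) (G : seq 'I_r -> R) :
  \sum_(f : (nleaves (Node pl l pr rt)).-tuple 'I_r) Pchar (Node pl l pr rt) a f * G f =
  \sum_(f1 : (nleaves l).-tuple 'I_r) \sum_(f2 : (nleaves rt).-tuple 'I_r)
     ((\sum_(b : 'I_r) trans pl a b * Pchar l b f1) *
      (\sum_(b : 'I_r) trans pr a b * Pchar rt b f2)) * G (f1 ++ f2).
Proof.
transitivity (\sum_(f1 : (nleaves l).-tuple 'I_r) \sum_(f2 : (nleaves rt).-tuple 'I_r)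
   Pchar (Node pl l pr rt) a (f1 ++ f2) * G (f1 ++ f2)).
  exact: (@sum_tuple_cat _ _ _ _ (fun f => Pchar (Node pl l pr rt) a f * G f)).
apply: eq_bigr => f1 _; apply: eq_bigr => f2 _ /=.
by rewrite take_size_cat ?drop_size_cat ?size_tuple.
Qed.

Lemma sum_node1 (pl pr : R) (l rt : tree R) (a : 'I_r) :
  \sum_(f : (nleaves (Node pl l pr rt)).-tuple 'I_r) Pchar (Node pl l pr rt) a f =
  \sum_(f1 : (nleaves l).-tuple 'I_r) \sum_(f2 : (nleaves rt).-tuple 'I_r)
     ((\sum_(b : 'I_r) trans pl a b * Pchar l b f1) *
      (\sum_(b : 'I_r) trans pr a b * Pchar rt b f2)).
Proof.
transitivity (\sum_(f1 : (nleaves l).-tuple 'I_r) \sum_(f2 : (nleaves rt).-tuple 'I_r)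
   Pchar (Node pl l pr rt) a (f1 ++ f2)).
  exact: (@sum_tuple_cat _ _ _ _ (fun f => Pchar (Node pl l pr rt) a f)).
apply: eq_bigr => f1 _; apply: eq_bigr => f2 _ /=.
by rewrite take_size_cat ?drop_size_cat ?size_tuple.
Qed.

Lemma mix_sum (t : tree R) p (a : 'I_r) :
  (forall b, \sum_(f : (nleaves t).-tuple 'I_r) Pchar t b f = 1) ->
  \sum_(f : (nleaves t).-tuple 'I_r) \sum_(b : 'I_r) trans p a b * Pchar t b f = 1.
Proof.
move=> IH; rewrite exchange_big /=.
rewrite -(trans_sum p a); apply: eq_bigr => b _.
by rewrite -mulr_sumr IH mulr1.
Qed.

Lemma Pchar_sum (t : tree R) a :
  \sum_(f : (nleaves t).-tuple 'I_r) Pchar t a f = 1.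
Proof.
elim: t a => [|pl l IHl pr rt IHr] a.
  rewrite (@sum_tuple_cons _ _ 0 (fun s => Pchar (@Leaf R) a s)).
  under eq_bigr => x _ do rewrite (@sum_tuple0 _ _ (fun s => Pchar (@Leaf R) a (x :: s))) /=.
  by rewrite (bigD1 a) //= eqxx big1 ?addr0 // => b /negbTE ->.
rewrite sum_node1.
by rewrite -big_distrlr /= (mix_sum l pl a IHl) (mix_sum rt pr a IHr) mulr1.
Qed.


Definition w (t : tree R) (i : nat) : R := (2%:R^-1) ^+ nth 0%N (depths t) i.

Lemma w_lshift (pl pr : R) (l rt : tree R) (i : nat) : (i < nleaves l)%N ->
  w (Node pl l pr rt) i = 2%:R^-1 * w l i.
Proof.
move=> hi; rewrite /w /= nth_cat size_map size_depths hi.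
by rewrite (nth_map 0%N) ?size_depths // exprS.
Qed.

Lemma w_rshift (pl pr : R) (l rt : tree R) (j : nat) : (j < nleaves rt)%N ->
  w (Node pl l pr rt) (nleaves l + j) = 2%:R^-1 * w rt j.
Proof.
move=> hj; rewrite /w /= nth_cat size_map size_depths ltnNge leq_addr /= addKn.
by rewrite (nth_map 0%N) ?size_depths // exprS.
Qed.

Lemma w_sum (t : tree R) : \sum_(i < nleaves t) w t i = 1.
Proof.
elim: t => [|pl l IHl pr rt IHr]; first by rewrite big_ord1 /w /= expr0.
rewrite big_split_ord /=.
under eq_bigr => i _ do rewrite w_lshift //.
under [X in _ + X]eq_bigr => i _ do rewrite w_rshift //.
rewrite -!mulr_sumr IHl IHr mulr1.
by field.
Qed.

Lemma w_ge0 t i : 0 <= w t i.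
Proof. by rewrite /w exprn_ge0 // invr_ge0 ler0n. Qed.

Lemma wt_aux (x : R) n1 n2 :
  x / 2%:R ^+ (n1 + n2).+1 *+ (2 ^ n2) = 2%:R^-1 * (x / 2%:R ^+ n1).
Proof.
rewrite -[_ *+ (2 ^ n2)]mulr_natr.
have h2 : (2%:R : R) != 0 by rewrite pnatr_eq0.
rewrite natrX exprS exprD; field; by rewrite !expf_neq0.
Qed.

Lemma Q_eq (t : tree R) (a : 'I_r) (f : seq 'I_r) : size f = nleaves t ->
  \sum_(c : (ninternal t).-tuple bool) (phi a t f c == a)%:R / 2%:R ^+ ninternal t
  = \sum_(i < nleaves t) w t i * (nth a f i == a)%:R.
Proof.
elim: t f => [|pl l IHl pr rt IHr] f hf.
  rewrite (@sum_tuple0 _ _ (fun c => (phi a (@Leaf R) f c == a)%:R / (2%:R : R) ^+ 0)) /=.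
  by rewrite big_ord1 /w /= expr0 divr1 mul1r.
set n1 := ninternal l; set n2 := ninternal rt; set nl := nleaves l.
have hfl : size (take nl f) = nleaves l.
  by rewrite size_takel // hf /= leq_addr.
have hfr : size (drop nl f) = nleaves rt.
  by rewrite size_drop hf /= /nl addKn.
transitivity (\sum_(x : bool) \sum_(c1 : n1.-tuple bool) \sum_(c2 : n2.-tuple bool)
      (phi a (Node pl l pr rt) f (x :: c1 ++ c2) == a)%:R / (2%:R : R) ^+ (n1 + n2).+1).
  transitivity (\sum_(x : bool) \sum_(c : (n1 + n2).-tuple bool)
      (phi a (Node pl l pr rt) f (x :: c) == a)%:R / (2%:R : R) ^+ (n1 + n2).+1).
    exact: (@sum_tuple_cons _ _ (n1+n2) (fun c => (phi a (Node pl l pr rt) f c == a)%:R / (2%:R : R) ^+ (n1 + n2).+1)).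
  apply: eq_bigr => x _.
  exact: (@sum_tuple_cat _ _ n1 n2 (fun c => (phi a (Node pl l pr rt) f (x :: c) == a)%:R / (2%:R : R) ^+ (n1 + n2).+1)).
transitivity (\sum_(c1 : n1.-tuple bool) \sum_(c2 : n2.-tuple bool)
   ((phi a l (take nl f) c1 == a)%:R + (phi a rt (drop nl f) c2 == a)%:R) / (2%:R : R) ^+ (n1 + n2).+1).
  rewrite big_bool -big_split /=; apply: eq_bigr => c1 _; rewrite -big_split /=.
  apply: eq_bigr => c2 _.
  rewrite -mulrDl take_size_cat ?drop_size_cat ?size_tuple //.
  set sl := phi a l _ c1; set sr := phi a rt _ c2.
  by case: (eqVneq sl sr) => [->|ne]; rewrite ?eqxx ?(negbTE ne).
under eq_bigr => c1 _ do under eq_bigr => c2 _ do rewrite mulrDl.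
under eq_bigr => c1 _ do rewrite big_split /=.
rewrite big_split /=.

under eq_bigr => c1 _ do rewrite sumr_const card_tuple card_bool wt_aux.
rewrite [X in _ + X]exchange_big /=.
under [X in _ + X]eq_bigr => c2 _ do rewrite sumr_const card_tuple card_bool addnC wt_aux.
rewrite -!mulr_sumr (IHl _ hfl) (IHr _ hfr).
rewrite big_split_ord /= !mulr_sumr; congr (_ + _); apply: eq_bigr => i _ /=.
  by rewrite w_lshift // mulrA nth_take.
by rewrite w_rshift // mulrA nth_drop.
Qed.


Lemma RA_formula (t : tree R) (a : 'I_r) :
  RA t a = 1 - \sum_(i < nleaves t) w t i * pleaf t a i.
Proof.
rewrite /RA.
under eq_bigr => f _ do rewrite (Q_eq t a f (size_tuple f)) mulr_sumr.
rewrite exchange_big /=.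
rewrite -[X in X - _](w_sum t) -sumrB; apply: eq_bigr => i _.
rewrite -[X in X - _]mulr1 /pleaf -mulrBr -[X in _ * (X - _)](Pchar_sum t a) -sumrB mulr_sumr.
apply: eq_bigr => f _.
by case: (nth a f i == a) => /=; ring.
Qed.

Lemma trans_ge0 (p : R) (a b : 'I_r) : 0 <= p <= (r.-1)%:R / r%:R -> 0 <= trans p a b.
Proof.
case/andP => p0 p1; rewrite /trans; case: eqP => _.
  rewrite subr_ge0; apply: (le_trans p1).
  rewrite ler_pdivrMr ?ltr0n ?mul1r ?ler_nat ?leq_pred //.
  by case: r hr.
by rewrite divr_ge0 // ler0n.
Qed.

Lemma Pchar_ge0 (t : tree R) (a : 'I_r) f : valid_probs r t -> 0 <= Pchar t a f.
Proof.
elim: t a f => [|pl l IHl pr rt IHr] a f /=.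
  by case: f => [|b [|]] //= _; rewrite ler0n.
case=> hl hr' vl vr.
apply: mulr_ge0; apply: sumr_ge0 => b _; apply: mulr_ge0;
  by [apply: trans_ge0 | apply: IHl | apply: IHr].
Qed.

Lemma pleaf_ge0 (t : tree R) (a : 'I_r) i : valid_probs r t -> 0 <= pleaf t a i.
Proof.
move=> v; rewrite /pleaf; apply: sumr_ge0 => f _.
by rewrite mulr_ge0 ?ler0n ?Pchar_ge0.
Qed.

End Main.

Theorem theorem2 (R : realFieldType) (r : nat) (hr : (2 <= r)%N)
  (t : tree R) (hroot : is_node t) (hvalid : valid_probs r t)
  (alpha : 'I_r) :
  [/\ RA t alpha =
        1 - \sum_(i < nleaves t)
              (2%:R^-1) ^+ (nth 0%N (depths t) i) * pleaf t alpha i,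
      1 - pmax t alpha <= RA t alpha
    & (forall i j : 'I_(nleaves t), pleaf t alpha i = pleaf t alpha j) ->
      RA t alpha = 1 - pmax t alpha].
Proof.
have E := @RA_formula R r hr t alpha.
have le_pm : forall i : 'I_(nleaves t), pleaf t alpha i <= pmax t alpha.
  by move=> i; rewrite /pmax; apply: (le_bigmax _ (fun j : 'I_(nleaves t) => pleaf t alpha j)).
split.
- exact: E.
- rewrite E lerD2l lerN2.
  apply: (le_trans (y := \sum_(i < nleaves t) w R t i * pmax t alpha)).
    by apply: ler_sum => i _; rewrite ler_wpM2l ?w_ge0.
  by rewrite -mulr_suml w_sum mul1r.
move=> H.
set i0 := Ordinal (nleaves_gt0 R t).
have pm : pmax t alpha = pleaf t alpha i0.
  apply/le_anti; rewrite le_pm andbT /pmax.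
  apply: bigmax_le => [|i _]; first by apply: pleaf_ge0.
  by rewrite (H i i0).
rewrite E pm; congr (_ - _).
under eq_bigr => i _ do rewrite (H i i0).
by rewrite -mulr_suml w_sum mul1r.
Qed.
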